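(* Let $p$ be an odd prime and let $F_{g\,\mathsf{ANY},\,h\,\mathsf{ANY}}(p)$ denote the number of pairs $(g,h)$ of integers with $1\le g\le p-1$, $1\le h\le p-1$ and $g^{h}\equiv h \pmod p$. Then \[ \left|F_{g\,\mathsf{ANY},\,h\,\mathsf{ANY}}(p)-(p-1)\right|\le d(p-1)\,\sigma(p-1)\,\sqrt{p}\,(1+\ln p). \]
   Context: $d(n)$ denotes the number of positive divisors of $n$, $\sigma(n)$ the sum of the positive divisors of $n$, and $\ln$ the natural logarithm. *)

(* Defs.v *)
From mathcomp Require Import all_boot.
From Stdlib Require Import Reals.

Definition ndivisors (n : nat) : nat := size (divisors n).
Definition sigma_div (n : nat) : nat := \sum_(d <- divisors n) d.

Definition F_any_any (p : nat) : nat :=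
  \sum_(1 <= g < p) \sum_(1 <= h < p) ((expn g h) %% p == h %% p : nat).

(* Main.v *)
Require Import Defs.
From mathcomp Require Import all_boot all_order all_algebra all_field.
Import GRing.Theory.
Local Open Scope ring_scope.

Lemma expr_gcd1 (R : unitRingType) (z : R) a b :
  (0 < a)%N -> z ^+ a = 1 -> z ^+ b = 1 -> z ^+ (gcdn a b) = 1.
Proof.
move=> a0 za zb; have [u _ /dvdnP [c Hc]] := Bezoutl b a0.
have : z ^+ (gcdn a b + u * b) = 1 by rewrite Hc mulnC exprM za expr1n.
by rewrite exprD mulnC exprM zb expr1n mulr1.
Qed.

Lemma count_le (p h : nat) : prime p -> (0 < h)%N -> (h < p)%N ->
  (\sum_(1 <= g < p) ((g ^ h) %% p == h %% p : nat) <= gcdn h p.-1)%N.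
Proof.
move=> pr h0 hp.
set P := fun g => ((g ^ h) %% p == h %% p)%N.
have -> : (\sum_(1 <= g < p) (P g : nat) = \sum_(i <- index_iota 1 p | P i) 1)%N.
  by rewrite [RHS]big_mkcond /=; apply: eq_bigr => i _; case: (P i).
rewrite sum1_count -size_filter.
set s := filter P (index_iota 1 p).
have nz : forall g, (0 < g)%N -> (g < p)%N -> (g%:R : 'F_p) != 0.
  move=> g g0 gp; apply/eqP => /(congr1 val); rewrite /= val_Fp_nat // modn_small //.
  by move=> E; rewrite E in g0.
have ms : forall g, g \in s -> (0 < g)%N /\ (g < p)%N.
  by move=> g; rewrite mem_filter mem_index_iota => /andP [_ /andP[]].
have Pg : forall g, g \in s -> (g%:R : 'F_p) ^+ h = h%:R.
  move=> g; rewrite mem_filter => /andP [/eqP E _].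
  by rewrite -natrX -(Fp_nat_mod pr (g ^ h)) E Fp_nat_mod.
case E : s => [|g0 s']; first by [].
have g0s : g0 \in s by rewrite E mem_head.
have [g00 g0p] := ms _ g0s.
pose f := fun g : nat => (g%:R : 'F_p) / g0%:R.
have -> : size (g0 :: s') = size (map f s) by rewrite size_map E.
have k0 : (0 < gcdn h p.-1)%N by rewrite gcdn_gt0 h0.
apply: max_unity_roots => //.
- apply/allP => z /mapP [g gs ->]; rewrite unity_rootE; apply/eqP.
  have [g_0 gp] := ms _ gs.
  have fnz : f g != 0 by rewrite /f mulf_neq0 ?invr_eq0 ?nz.
  apply: expr_gcd1 => //.
    rewrite /f exprMn exprVn Pg // Pg // divff //.
    by apply: nz => //; apply: (leq_trans hp).
  apply: (mulIf fnz); rewrite -exprSr prednK ?prime_gt0 // mul1r.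
  by have := expf_card (f g); rewrite card_Fp.
- rewrite map_inj_in_uniq ?filter_uniq ?iota_uniq //.
  move=> x y xs ys /(mulIf _) H.
  have /H {}H : (g0%:R : 'F_p)^-1 != 0 by rewrite invr_eq0 nz.
  have [_ xp] := ms _ xs; have [_ yp] := ms _ ys.
  by move/(congr1 val): H; rewrite /= !val_Fp_nat // !modn_small.
Qed.

Lemma sum_gcd n : (0 < n)%N ->
  (\sum_(1 <= h < n.+1) gcdn h n <= n * size (divisors n))%N.
Proof.
move=> n0.
apply: (@leq_trans (\sum_(1 <= h < n.+1) \sum_(d <- divisors n) (d %| h) * d)).
  apply: leq_sum => h _.
  rewrite (bigD1_seq (gcdn h n)) /= ?divisors_uniq //; last first.
    by rewrite -dvdn_divisors // dvdn_gcdr.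
  by rewrite dvdn_gcdl mul1n leq_addr.
rewrite exchange_big /=.
apply: (@leq_trans (\sum_(d <- divisors n) n)).
  apply: leq_sum => d _.
  rewrite -big_distrl /= -divn_count_dvd; exact: leq_trunc_div.
rewrite big_const_seq count_predT iter_addn_0 mulnC //.
Qed.
Local Close Scope ring_scope.
From Stdlib Require Import Reals Lra.

Lemma F_bound p : prime p ->
  (F_any_any p <= ndivisors (p - 1) * sigma_div (p - 1))%N.
Proof.
move=> pr; have p1 := prime_gt1 pr.
set n := (p - 1)%N.
have pn : p = n.+1 by rewrite /n subn1 prednK // ltnW.
have n0 : (0 < n)%N by rewrite /n subn_gt0.
rewrite /F_any_any exchange_big /=.
apply: (@leq_trans (\sum_(1 <= h < p) gcdn h n)).
  rewrite big_nat_cond [X in (_ <= X)%N]big_nat_cond.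
  apply: leq_sum => h /andP [/andP [h1 hp] _].
  have := count_le p h pr h1 hp. by rewrite /n subn1.
rewrite {1}pn; apply: (leq_trans (sum_gcd n n0)).
rewrite /ndivisors mulnC leq_mul2l /sigma_div.
rewrite (bigD1_seq n) /= ?divisors_uniq ?divisors_id // ?leq_addr orbT //.
Qed.

Lemma real_fin (a b M s l : R) : (0 <= a -> 0 <= b -> a <= M -> b <= M ->
  1 <= s -> 0 <= l -> Rabs (a - b) <= M * s * (1 + l))%R.
Proof.
move=> H0 H1 Ha Hb Hs Hl.
have HM : (0 <= M)%R by lra.
have HM2 : (M <= M * s * (1 + l))%R.
  rewrite -{1}(Rmult_1_r M) Rmult_assoc; apply: Rmult_le_compat_l => //.
  rewrite -{1}(Rmult_1_r 1); apply: Rmult_le_compat; lra.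
apply: Rle_trans HM2.
apply: Rabs_le; lra.
Qed.

Theorem mainTheorem1 (p : nat) (Hp : prime p) (Hodd : odd p) :
  (Rabs (INR (F_any_any p) - INR (p - 1))
   <= INR (ndivisors (p - 1)) * INR (sigma_div (p - 1)) * sqrt (INR p)
      * (1 + ln (INR p)))%R.
Proof.
have p1 := prime_gt1 Hp.
have HF := F_bound p Hp.
have Hn : (p - 1 <= ndivisors (p - 1) * sigma_div (p - 1))%N.
  have n0 : (0 < p - 1)%N by rewrite subn_gt0.
  rewrite /ndivisors /sigma_div.
  have D1 : (0 < size (divisors (p - 1)))%N.
    by case: (divisors (p-1)) (divisors_id n0).
  apply: (@leq_trans (\sum_(d <- divisors (p - 1)) d)).
    by rewrite (bigD1_seq (p - 1)) /= ?divisors_uniq ?divisors_id // leq_addr.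
  by rewrite -{1}(mul1n (\sum_(d <- _) d)) leq_mul2r D1 orbT.
move/leP/le_INR: HF; move/leP/le_INR: Hn; rewrite mult_INR => Hn HF.
set M := (INR (ndivisors (p - 1)) * INR (sigma_div (p - 1)))%R in Hn HF *.
apply: real_fin => //; try apply: pos_INR.
  rewrite -sqrt_1; apply: sqrt_le_1_alt.
  by apply: (le_INR 1); apply/leP; apply: ltnW.
rewrite -ln_1; apply: Rlt_le; apply: ln_increasing.
  exact: Rlt_0_1.
by apply: (lt_INR 1); apply/ltP.
Qed.
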